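(* Let $(X,d)$ be a compact metric space, let $\{f_n\}_{n\in\mathbb{N}}$ be a sequence of homeomorphisms of $X$ and let $f$ be a homeomorphism of $X$ such that $f_n\to f$ uniformly and $f_n^{-1}\to f^{-1}$ uniformly on $X$. Then for $x\in X$: (1) $x\in U_f(X)$ if and only if there exists $\delta>0$ such that for every pair of distinct points $y,z\in B(x,\delta)$, $\bigcup_{m\ge 1}\bigcap_{n\ge m}E_z(f_n,y,\delta)\neq\emptyset$; (2) $x\in M_f(X)$ if and only if there exists $\delta>0$ such that for each $y\in B(x,\delta)$ and every pair of distinct points $u,v\in\overline{\mathcal{O}_f(y)}$, $\bigcup_{m\ge 1}\bigcap_{n\ge m}E_v(f_n,u,\delta)\neq\emptyset$.
   Context: For a homeomorphism $f$ of a compact metric space $(X,d)$: $B(x,\epsilon)=\{y: d(x,y)<\epsilon\}$, $\mathcal{O}_f(x)=\{f^n(x):n\in\mathbb{Z}\}$, and for $x,y\in X$, $\epsilon>0$, $E_y(f,x,\epsilon)=\{n\in\mathbb{Z}: d(f^n(x),f^n(y))>\epsilon\}$ (negative powers are iterates of $f^{-1}$). $f$ is expansive on a subset $A\subset X$ with expansivity constant $\mathfrak{c}>0$ if for every pair of distinct $x,y\in A$ there is $n\in\mathbb{Z}$ with $d(f^n(x),f^n(y))>\mathfrak{c}$. $U_f(X)$ is the set of points $x$ for which there is $\mathfrak{c}>0$ such that $f$ is expansive on $B(x,\mathfrak{c})$ with constant $\mathfrak{c}$. $M_f(X)$ is the set of points $x$ for which there is $\mathfrak{c}>0$ such that for every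 $y\in B(x,\mathfrak{c})$, $f$ is expansive on $\overline{\mathcal{O}_f(y)}$ with constant $\mathfrak{c}$. *)

(* Defs.v *)
From Stdlib Require Import Reals ZArith List.
Open Scope R_scope.

Record is_metric {X : Type} (d : X -> X -> R) : Prop := {
  metric_nonneg : forall x y, 0 <= d x y;
  metric_eq0 : forall x y, d x y = 0 <-> x = y;
  metric_sym : forall x y, d x y = d y x;
  metric_tri : forall x y z, d x z <= d x y + d y z }.

Definition ball {X : Type} (d : X -> X -> R) (x : X) (eps : R) : X -> Prop :=
  fun y => d x y < eps.

Definition d_open {X : Type} (d : X -> X -> R) (U : X -> Prop) : Prop :=
  forall x, U x -> exists e, 0 < e /\ forall y, ball d x e y -> U y.

Definition d_compact {X : Type} (d : X -> X -> R) : Prop :=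
  forall (I : Type) (U : I -> X -> Prop),
    (forall i, d_open d (U i)) -> (forall x, exists i, U i x) ->
    exists l : list I, forall x, exists i, In i l /\ U i x.

Definition d_continuous {X : Type} (d : X -> X -> R) (f : X -> X) : Prop :=
  forall x e, 0 < e -> exists dl, 0 < dl /\ forall y, d x y < dl -> d (f x) (f y) < e.

Definition homeo {X : Type} (d : X -> X -> R) (f finv : X -> X) : Prop :=
  (forall x, finv (f x) = x) /\ (forall x, f (finv x) = x) /\
  d_continuous d f /\ d_continuous d finv.

Definition unif_conv {X : Type} (d : X -> X -> R) (g : nat -> X -> X) (h : X -> X) : Prop :=
  forall e, 0 < e -> exists N, forall n x, (N <= n)%nat -> d (g n x) (h x) < e.

Definition iterz {X : Type} (f finv : X -> X) (n : Z) (x : X) : X :=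
  if Z.leb 0 n then Nat.iter (Z.to_nat n) f x else Nat.iter (Z.to_nat (- n)) finv x.

Definition orbit {X : Type} (f finv : X -> X) (x : X) : X -> Prop :=
  fun y => exists n : Z, y = iterz f finv n x.

Definition closure {X : Type} (d : X -> X -> R) (A : X -> Prop) : X -> Prop :=
  fun z => forall e, 0 < e -> exists w, A w /\ d z w < e.

Definition Eset {X : Type} (d : X -> X -> R) (f finv : X -> X) (y x : X) (eps : R) : Z -> Prop :=
  fun n => d (iterz f finv n x) (iterz f finv n y) > eps.

Definition expansive_on {X : Type} (d : X -> X -> R) (f finv : X -> X) (A : X -> Prop) (c : R) : Prop :=
  forall x y, A x -> A y -> x <> y -> exists n : Z, d (iterz f finv n x) (iterz f finv n y) > c.

Definition Uf {X : Type} (d : X -> X -> R) (f finv : X -> X) : X -> Prop :=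
  fun x => exists c, 0 < c /\ expansive_on d f finv (ball d x c) c.

Definition Mf {X : Type} (d : X -> X -> R) (f finv : X -> X) : X -> Prop :=
  fun x => exists c, 0 < c /\ forall y, ball d x c y ->
     expansive_on d f finv (closure d (orbit f finv y)) c.

Definition liminf_E_nonempty {X : Type} (d : X -> X -> R) (fs fsinv : nat -> X -> X)
  (z y : X) (delta : R) : Prop :=
  exists k : Z, exists m : nat, (1 <= m)%nat /\
    forall n : nat, (m <= n)%nat -> Eset d (fs n) (fsinv n) z y delta k.

(* Main.v *)
Require Import Defs.
From Stdlib Require Import Reals ZArith List Lra Lia.
Open Scope R_scope.

Lemma iter_conv {X : Type} (d : X -> X -> R) (g : nat -> X -> X) (h : X -> X) :
  is_metric d -> d_continuous d h -> unif_conv d g h ->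
  forall j y e, 0 < e -> exists N, forall n, (N <= n)%nat ->
    d (Nat.iter j (g n) y) (Nat.iter j h y) < e.
Proof.
  intros Hm Hc Hu j; induction j as [|j IH]; intros y e He.
  - exists 0%nat; intros n _; simpl. rewrite (proj2 (metric_eq0 d Hm y y) eq_refl). lra.
  - destruct (Hc (Nat.iter j h y) (e/2)) as [dl [Hdl Hcd]]; [lra|].
    destruct (IH y dl Hdl) as [N1 HN1].
    destruct (Hu (e/2)) as [N2 HN2]; [lra|].
    exists (max N1 N2); intros n Hn; simpl.
    set (a := Nat.iter j (g n) y). set (b := Nat.iter j h y).
    assert (H1 : d (g n a) (h a) < e/2) by (apply HN2; lia).
    assert (H2 : d (h b) (h a) < e/2).
    { apply Hcd. rewrite (metric_sym d Hm). apply HN1; lia. }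
    pose proof (metric_tri d Hm (g n a) (h a) (h b)) as T.
    rewrite (metric_sym d Hm (h a) (h b)) in T. lra.
Qed.

Lemma iterz_conv {X : Type} (d : X -> X -> R) (fs fsinv : nat -> X -> X) (f finv : X -> X) :
  is_metric d -> homeo d f finv -> unif_conv d fs f -> unif_conv d fsinv finv ->
  forall k y e, 0 < e -> exists N, forall n, (N <= n)%nat ->
    d (iterz (fs n) (fsinv n) k y) (iterz f finv k y) < e.
Proof.
  intros Hm [_ [_ [Hc1 Hc2]]] Hu1 Hu2 k y e He. unfold iterz.
  destruct (Z.leb 0 k).
  - apply (iter_conv d fs f Hm Hc1 Hu1); auto.
  - apply (iter_conv d fsinv finv Hm Hc2 Hu2); auto.
Qed.

Lemma transfer_gt {X : Type} (d : X -> X -> R) (p q : nat -> X) (P Q : X) (c : R) :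
  is_metric d ->
  (forall e, 0 < e -> exists N, forall n, (N <= n)%nat -> d (p n) P < e) ->
  (forall e, 0 < e -> exists N, forall n, (N <= n)%nat -> d (q n) Q < e) ->
  d P Q > c -> exists m, (1 <= m)%nat /\ forall n, (m <= n)%nat -> d (p n) (q n) > c.
Proof.
  intros Hm Hp Hq Hpq.
  destruct (Hp ((d P Q - c)/2)) as [N1 HN1]; [lra|].
  destruct (Hq ((d P Q - c)/2)) as [N2 HN2]; [lra|].
  exists (max 1 (max N1 N2)); split; [lia|]; intros n Hn.
  assert (A := HN1 n ltac:(lia)). assert (B := HN2 n ltac:(lia)).
  pose proof (metric_tri d Hm P (p n) Q) as T1.
  pose proof (metric_tri d Hm (p n) (q n) Q) as T2.
  rewrite (metric_sym d Hm P (p n)) in T1.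
  lra.
Qed.

Lemma transfer_ge {X : Type} (d : X -> X -> R) (p q : nat -> X) (P Q : X) (c : R) :
  is_metric d ->
  (forall e, 0 < e -> exists N, forall n, (N <= n)%nat -> d (p n) P < e) ->
  (forall e, 0 < e -> exists N, forall n, (N <= n)%nat -> d (q n) Q < e) ->
  (exists m, (1 <= m)%nat /\ forall n, (m <= n)%nat -> d (p n) (q n) > c) ->
  d P Q >= c.
Proof.
  intros Hm Hp Hq [m [_ Hmn]].
  destruct (Rlt_le_dec (d P Q) c) as [Hlt|Hle]; [|lra].
  destruct (Hp ((c - d P Q)/2)) as [N1 HN1]; [lra|].
  destruct (Hq ((c - d P Q)/2)) as [N2 HN2]; [lra|].
  set (n := max m (max N1 N2)).
  assert (A := HN1 n ltac:(lia)). assert (B := HN2 n ltac:(lia)).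
  assert (C := Hmn n ltac:(lia)).
  pose proof (metric_tri d Hm (p n) P (q n)) as T1.
  pose proof (metric_tri d Hm P Q (q n)) as T2.
  rewrite (metric_sym d Hm Q (q n)) in T2.
  lra.
Qed.

Theorem theorem2p4 (X : Type) (d : X -> X -> R)
  (fs fsinv : nat -> X -> X) (f finv : X -> X) :
  is_metric d -> d_compact d ->
  (forall n, homeo d (fs n) (fsinv n)) -> homeo d f finv ->
  unif_conv d fs f -> unif_conv d fsinv finv ->
  forall x : X,
    (Uf d f finv x <->
      exists delta, 0 < delta /\
        forall y z, ball d x delta y -> ball d x delta z -> y <> z ->
          liminf_E_nonempty d fs fsinv z y delta)
    /\
    (Mf d f finv x <->
      exists delta, 0 < delta /\
        forall y, ball d x delta y ->
          forall u v, closure d (orbit f finv y) u -> closure d (orbit f finv y) v -> u <> v ->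
            liminf_E_nonempty d fs fsinv v u delta).
Proof.
  intros Hm _ _ Hh Hu1 Hu2 x.
  pose proof (iterz_conv d fs fsinv f finv Hm Hh Hu1 Hu2) as Hc.
  split; split.
  - intros [c [Hc0 Hexp]]. exists c; split; auto.
    intros y z Hy Hz Hyz. destruct (Hexp y z Hy Hz Hyz) as [k Hk].
    exists k. unfold Eset.
    apply (transfer_gt d (fun n => iterz (fs n) (fsinv n) k y)
             (fun n => iterz (fs n) (fsinv n) k z) (iterz f finv k y) (iterz f finv k z) c Hm); auto.
  - intros [dl [Hdl H]]. exists (dl/2); split; [lra|].
    intros y z Hy Hz Hyz. unfold ball in *.
    destruct (H y z ltac:(lra) ltac:(lra) Hyz) as [k Hk].
    exists k.
    assert (d (iterz f finv k y) (iterz f finv k z) >= dl); [|lra].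
    apply (transfer_ge d (fun n => iterz (fs n) (fsinv n) k y)
             (fun n => iterz (fs n) (fsinv n) k z) (iterz f finv k y) (iterz f finv k z) dl Hm); auto.
  - intros [c [Hc0 Hexp]]. exists c; split; auto.
    intros y Hy u v Hu Hv Huv. destruct (Hexp y Hy u v Hu Hv Huv) as [k Hk].
    exists k. unfold Eset.
    apply (transfer_gt d (fun n => iterz (fs n) (fsinv n) k u)
             (fun n => iterz (fs n) (fsinv n) k v) (iterz f finv k u) (iterz f finv k v) c Hm); auto.
  - intros [dl [Hdl H]]. exists (dl/2); split; [lra|].
    intros y Hy u v Hu Hv Huv. unfold ball in *.
    destruct (H y ltac:(lra) u v Hu Hv Huv) as [k Hk].
    exists k.
    assert (d (iterz f finv k u) (iterz f finv k v) >= dl); [|lra].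
    apply (transfer_ge d (fun n => iterz (fs n) (fsinv n) k u)
             (fun n => iterz (fs n) (fsinv n) k v) (iterz f finv k u) (iterz f finv k v) dl Hm); auto.
Qed.
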